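(* Under the assumptions $\max_{i,j}|A_{ij}|\le1$ and $|\xi^{(t)}|\le1$ for all $t$, let $p^{(T)}=\frac1T\sum_{t=1}^{T}e^{(i^{(t)})}$ be the empirical distribution of the arms chosen by the Influential LCB algorithm in rounds $1,\dots,T$, and let $\mathcal L_2(p)=\frac12p^\top Ap$. Then for every $T\ge K+1$, $$\mathcal L_2(p^{(T)})-\min_{p\in\Delta_K}\mathcal L_2(p)\;\le\;\frac{5K+1}{2T}+\big(2K+2\|l^{(1)}\|_\infty+4\big)\frac{\log T}{T},$$ where $\Delta_K=\{p\in\mathbb{R}^K: p\ge0,\ \sum_ip_i=1\}$.
   Context: Influential bandit problem: $K$ arms, symmetric positive semi-definite $A\in\mathbb{R}^{K\times K}$, initial loss vector $l^{(1)}\in\mathbb{R}^K$; at round $t$ the algorithm chooses $i^{(t)}$, observes $L^{(t)}=l^{(t)}_{i^{(t)}}+\xi^{(t)}$, and $l^{(t+1)}_j=l^{(t)}_j+A_{i^{(t)}j}$ for all $j$. Influential LCB algorithm: initialize $c^{(1)}_i=0$, $\hat l^{(1)}_i=-\infty$; at round $t$ choose $i^{(t)}\in\arg\min_i(\hat l^{(t)}_i-c^{(t)}_i)$, then set $\hat l^{(t+1)}_{i^{(t)}}=L^{(t)}$, $\hat l^{(t+1)}_i=\hat l^{(t)}_i$ otherwise, and $c^{(t+1)}_{i^{(t)}}=1$, $c^{(t+1)}_i=c^{(t)}_i+1$ otherwise. $e^{(i)}$ is the $i$-th standard basis vector; $\log$ is the natural logarithm. *)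

(* Defs.v *)
From HB Require Import structures.
From mathcomp Require Import all_boot all_order all_algebra.
From mathcomp Require Import all_classical all_reals all_analysis.
Set Implicit Arguments. Unset Strict Implicit. Unset Printing Implicit Defensive.
Import Order.TTheory GRing.Theory Num.Theory.
Local Open Scope ring_scope.

(* Rounds are numbered t = 1, 2, ...; index 0 is a dummy equal to round 1. *)

Section Influential.
Variables (R : realType) (K : nat).

Definition psd (A : 'M[R]_K) : Prop :=
  forall x : 'cV[R]_K, 0 <= (x^T *m A *m x) 0 0.

Fixpoint loss (A : 'M[R]_K) (l1 : 'I_K -> R) (i : nat -> 'I_K) (t : nat)
  : 'I_K -> R :=
  match t with
  | 0 => l1
  | 1 => l1
  | t'.+1 => fun j => loss A l1 i t' j + A (i t') j
  end.

Fixpoint lhat (i : nat -> 'I_K) (L : nat -> R) (t : nat) : 'I_K -> \bar R :=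
  match t with
  | 0 => fun _ => -oo%E
  | 1 => fun _ => -oo%E
  | t'.+1 => fun k => if k == i t' then (L t')%:E else lhat i L t' k
  end.

Fixpoint cnt (i : nat -> 'I_K) (t : nat) : 'I_K -> nat :=
  match t with
  | 0 => fun _ => 0%N
  | 1 => fun _ => 0%N
  | t'.+1 => fun k => if k == i t' then 1%N else (cnt i t' k).+1
  end.

(* i is a run of Influential LCB (arbitrary tie-breaking) with observations
   L^{(t)} = l^{(t)}_{i^{(t)}} + xi^{(t)} *)
Definition influential_lcb_run (A : 'M[R]_K) (l1 : 'I_K -> R)
  (xi : nat -> R) (i : nat -> 'I_K) : Prop :=
  let L := fun t => loss A l1 i t (i t) + xi t in
  forall t : nat, (1 <= t)%N -> forall k : 'I_K,
    (lhat i L t (i t) - ((cnt i t (i t))%:R)%:E <=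
     lhat i L t k - ((cnt i t k)%:R)%:E)%E.

Definition e_vec (k : 'I_K) : 'cV[R]_K := delta_mx k 0.

Definition emp_dist (i : nat -> 'I_K) (T : nat) : 'cV[R]_K :=
  (T%:R)^-1 *: \sum_(t < T) e_vec (i t.+1).

Definition L2 (A : 'M[R]_K) (p : 'cV[R]_K) : R := 2^-1 * (p^T *m A *m p) 0 0.

Definition in_simplex (p : 'cV[R]_K) : Prop :=
  (forall k, 0 <= p k 0) /\ \sum_k p k 0 = 1.

Definition sup_norm (v : 'I_K -> R) : R := \big[Num.max/0]_k `|v k|.

End Influential.

(* Main.v *)
Require Import Defs.
From HB Require Import structures.
From mathcomp Require Import all_boot all_order all_algebra.
From mathcomp Require Import all_classical all_reals all_analysis.
From mathcomp Require Import ring lra.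
Import Order.TTheory GRing.Theory Num.Theory.
Local Open Scope ring_scope.
Set Implicit Arguments. Unset Strict Implicit. Unset Printing Implicit Defensive.

Section Pf.
Variables (R : realType) (K : nat) (A : 'M[R]_K) (l1 : 'I_K -> R)
  (xi : nat -> R) (i : nat -> 'I_K).
Hypothesis Asym : A^T = A.
Hypothesis Apsd : psd A.
Hypothesis Abnd : forall a b : 'I_K, `|A a b| <= 1.
Hypothesis xibnd : forall t : nat, `|xi t| <= 1.
Hypothesis run : influential_lcb_run A l1 xi i.

Local Notation Lo := (fun t => loss A l1 i t (i t) + xi t).
Local Notation lo := (loss A l1 i).
Local Notation lh := (lhat i Lo).
Local Notation cn := (cnt i).

Lemma sup_ge0 : 0 <= sup_norm l1.
Proof. exact: bigmax_ge_id. Qed.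

Lemma sup_ge k : `|l1 k| <= sup_norm l1.
Proof. exact: le_bigmax. Qed.

Lemma lossS t j : (0 < t)%N -> lo t.+1 j = lo t j + A (i t) j.
Proof. by case: t. Qed.

Lemma lhatS t k : (0 < t)%N -> lh t.+1 k = if k == i t then (Lo t)%:E else lh t k.
Proof. by case: t. Qed.

Lemma cntS t k : (0 < t)%N -> cn t.+1 k = if k == i t then 1%N else (cn t k).+1.
Proof. by case: t. Qed.

Lemma cnt_le t k : (cn t.+1 k <= t)%N.
Proof.
elim: t => [//|t IH]; rewrite cntS //; case: ifP => // _.
Qed.

Lemma cnt_ge1 t k : (1 <= cn t.+2 k)%N.
Proof. by rewrite cntS //; case: ifP. Qed.

Definition N m : 'cV[R]_K := \sum_(s < m) e_vec R (i s.+1).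
Definition v m : 'rV[R]_K := (N m)^T *m A.

Lemma NS m : N m.+1 = N m + e_vec R (i m.+1).
Proof. by rewrite /N big_ord_recr. Qed.

Lemma eA j k : ((e_vec R j)^T *m A) 0 k = A j k.
Proof. by rewrite /e_vec trmx_delta -rowE mxE. Qed.

Lemma vS m k : v m.+1 0 k = v m 0 k + A (i m.+1) k.
Proof. by rewrite /v NS linearD /= mulmxDl mxE eA. Qed.

Lemma v0 k : v 0 0 k = 0.
Proof. by rewrite /v /N big_ord0 linear0 mul0mx mxE. Qed.

Lemma loss_v m k : lo m.+1 k = l1 k + v m 0 k.
Proof.
elim: m => [|m IH]; first by rewrite v0 addr0.
by rewrite lossS // IH vS addrA.
Qed.

Lemma v_bnd m k : `|v m 0 k| <= m%:R.
Proof.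
elim: m => [|m IH]; first by rewrite v0 normr0.
rewrite vS; apply: (le_trans (ler_normD _ _)).
by rewrite -nat1r addrC lerD.
Qed.


Lemma inv m k : (lh m.+1 k = -oo%E /\ cn m.+1 k = m) \/
  exists r, lh m.+1 k = r%:E /\ `|r - lo m.+1 k| <= (cn m.+1 k)%:R + 1.
Proof.
elim: m k => [|m IH] k; first by left.
rewrite lhatS // cntS // (@lossS m.+1) //.
case: eqP => [->|/eqP nk].
  right; exists (lo m.+1 (i m.+1) + xi m.+1); split => //.
  have -> : lo m.+1 (i m.+1) + xi m.+1 - (lo m.+1 (i m.+1) + A (i m.+1) (i m.+1))
    = xi m.+1 - A (i m.+1) (i m.+1) by ring.
  apply: (le_trans (ler_normB _ _)); exact: lerD.
case: (IH k) => [[-> ->]|[r [-> hr]]]; [by left | right; exists r; split => //].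
have -> : r - (lo m.+1 k + A (i m.+1) k) = (r - lo m.+1 k) - A (i m.+1) k by ring.
apply: (le_trans (ler_normB _ _)).
by rewrite -natr1 lerD.
Qed.


Lemma nrm (x y : R) : `|x| <= y -> - y <= x /\ x <= y.
Proof. by rewrite ler_norml => /andP. Qed.

Lemma gap m k : v m 0 (i m.+1) - v m 0 k <=
  2 * (cn m.+1 (i m.+1))%:R + 2 + 2 * sup_norm l1.
Proof.
have s0 := sup_ge0.
have [a1 a2] := nrm (v_bnd m (i m.+1)).
have [b1 b2] := nrm (v_bnd m k).
have [c1 c2] := nrm (sup_ge (i m.+1)).
have [d1 d2] := nrm (sup_ge k).
case: (inv m (i m.+1)) => [[hj ->]|[rj [hj hrj]]]; first lra.
have := run (t:=m.+1) isT k; rewrite hj.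
case: (inv m k) => [[hk _]|[rk [hk hrk]]]; first by rewrite hk.
rewrite hk -!EFinB lee_fin => h.
have [e1 e2] := nrm hrj. have [f1 f2] := nrm hrk.
move: e1 e2 f1 f2; rewrite !loss_v => e1 e2 f1 f2.
lra.
Qed.


Definition bil (x z : 'cV[R]_K) := (x^T *m A *m z) 0 0.

Lemma bilDl x y z : bil (x + y) z = bil x z + bil y z.
Proof. by rewrite /bil linearD /= !mulmxDl mxE. Qed.
Lemma bilDr x y z : bil x (y + z) = bil x y + bil x z.
Proof. by rewrite /bil mulmxDr mxE. Qed.
Lemma bilZl c x z : bil (c *: x) z = c * bil x z.
Proof. by rewrite /bil linearZ /= -!scalemxAl mxE. Qed.
Lemma bilZr c x z : bil x (c *: z) = c * bil x z.
Proof. by rewrite /bil -scalemxAr mxE. Qed.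
Lemma bil_sym x z : bil x z = bil z x.
Proof.
rewrite /bil; transitivity (((x^T *m A *m z)^T) 0 0); first by rewrite [in RHS]mxE.
by rewrite !trmx_mul trmxK Asym mulmxA.
Qed.
Lemma bil_ge0 x : 0 <= bil x x.
Proof. exact: Apsd. Qed.

Lemma bil_e x j : bil x (e_vec R j) = (x^T *m A) 0 j.
Proof. by rewrite /bil /e_vec -colE mxE. Qed.

Lemma bil_vq m q : bil (N m) q = \sum_b v m 0 b * q b 0.
Proof. by rewrite /bil mxE. Qed.

Lemma QS m : bil (N m.+1) (N m.+1) = bil (N m) (N m) + 2 * v m 0 (i m.+1) + A (i m.+1) (i m.+1).
Proof.
rewrite NS bilDl !bilDr (bil_sym (e_vec R _) (N m)) !bil_e eA /v; ring.
Qed.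

Lemma Q0 : bil (N 0) (N 0) = 0.
Proof. by rewrite /N big_ord0 /bil mulmx0 mxE. Qed.

Lemma Q_bnd m : bil (N m) (N m) <= m%:R ^+ 2.
Proof.
elim: m => [|m IH]; first by rewrite Q0 expr0n.
rewrite QS.
have [a1 a2] := nrm (v_bnd m (i m.+1)).
have [b1 b2] := nrm (Abnd (i m.+1) (i m.+1)).
rewrite -natr1; nra.
Qed.

Lemma convex m (c : R) q : 2 * c * bil (N m) q <= c ^+ 2 * bil q q + bil (N m) (N m).
Proof.
have := bil_ge0 (c *: q + (-1) *: N m).
rewrite !bilDl !bilDr !bilZl !bilZr (bil_sym q (N m)).
lra.
Qed.


Lemma wstep m q : in_simplex q ->
  v m 0 (i m.+1) <= bil (N m) q + (2 * (cn m.+1 (i m.+1))%:R + 2 + 2 * sup_norm l1).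
Proof.
move=> [q0 q1]; set G := (X in _ + X).
rewrite bil_vq -[v m 0 _]mulr1 -q1 mulr_sumr.
rewrite -[G]mulr1 -q1 mulr_sumr -big_split /=.
apply: ler_sum => b _; rewrite -mulrDl mulrC [X in _ <= X]mulrC.
apply: ler_wpM2l => //; rewrite /G; have := gap m b; lra.
Qed.

Lemma ln_diff (x y : R) : 0 < y -> y <= x -> (x - y) / x <= ln x - ln y.
Proof.
move=> y0 yx; have x0 : 0 < x by apply: lt_le_trans yx.
have h : -1 < - ((x - y) / x).
  rewrite ltrNl opprK ltr_pdivrMr // mul1r; lra.
have := le_ln1Dx h.
have -> : 1 + - ((x - y) / x) = y / x by by field; rewrite gt_eqF.
rewrite ln_div ?posrE //; lra.
Qed.

Definition Phi t := \sum_a ln (t%:R - (cn t a)%:R : R).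

Lemma PhiS m : Phi m.+2 - Phi m.+1 = ln (m.+1%:R) - ln (m.+1%:R - (cn m.+1 (i m.+1))%:R).
Proof.
rewrite /Phi (bigD1 (i m.+1)) // [X in _ - X](bigD1 (i m.+1)) //.
rewrite cntS // eqxx.
have -> : \sum_(a | a != i m.+1) ln ((m.+2)%:R - (cn m.+2 a)%:R : R) =
          \sum_(a | a != i m.+1) ln ((m.+1)%:R - (cn m.+1 a)%:R : R).
  apply: eq_bigr => a /negbTE ha; rewrite cntS // ha.
  congr ln; rewrite -[(m.+2)%:R]natr1 -[((cn m.+1 a).+1)%:R]natr1; lra.
rewrite -[(m.+2)%:R]natr1 mulr1n addrK (eq_bigl (fun a => a != i m.+1)) //.
have E : forall x y z : R, (x + z) - (y + z) = x - y by move=> *; ring.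
exact: E.
Qed.

Lemma Phi_step m : (cn m.+1 (i m.+1))%:R / m.+1%:R <= Phi m.+2 - Phi m.+1.
Proof.
rewrite PhiS.
have hc := cnt_le m (i m.+1).
have hc' : ((cn m.+1 (i m.+1))%:R : R) <= m%:R by rewrite ler_nat.
have := @ln_diff (m.+1%:R) (m.+1%:R - (cn m.+1 (i m.+1))%:R).
rewrite -natr1.
have -> : m%:R + 1 - (m%:R + 1 - (cn m.+1 (i m.+1))%:R) = ((cn m.+1 (i m.+1))%:R : R) by ring.
have m0 : (0:R) <= m%:R by rewrite ler0n.
have c0 : (0:R) <= (cn m.+1 (i m.+1))%:R by rewrite ler0n.
apply; lra.
Qed.

Lemma ln_step m : (0 < m)%N -> 1 / m.+1%:R <= ln (m.+1%:R : R) - ln m%:R.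
Proof.
move=> m0; have := @ln_diff (m.+1%:R) (m%:R).
rewrite -natr1; have -> : m%:R + 1 - m%:R = 1 :> R by ring.
have : (0 : R) < m%:R by rewrite ltr0n.
move=> h; apply; lra.
Qed.

Lemma Phi_ge0 t : 0 <= Phi t.+1.
Proof.
apply: sumr_ge0 => a _; apply: ln_ge0.
have := cnt_le t a; rewrite -(ler_nat R) -natr1; lra.
Qed.

Lemma Phi_le T : (0 < T)%N -> Phi T.+1 <= K%:R * ln (T%:R).
Proof.
case: T => // T _.
rewrite /Phi mulr_natl.
have -> : ln (T.+1%:R : R) *+ K = \sum_(a : 'I_K) ln T.+1%:R by rewrite sumr_const card_ord.
apply: ler_sum => a _.
have := cnt_ge1 T a; rewrite -(ler_nat R) => h1.
have := cnt_le T.+1 a; rewrite -(ler_nat R) => h2.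
rewrite ler_ln ?posrE; rewrite -?natr1 ?ltr0n; lra.
Qed.


Lemma alg_step (M a a' vj bq G Qq U Ajj : R) : 0 < M ->
  a' = a + 2 * vj + Ajj -> vj <= bq + G -> 2 * M * bq <= M ^+ 2 * Qq + a ->
  a - M ^+ 2 * Qq <= M * U -> Ajj <= 1 -> 0 <= Qq ->
  a' - (M + 1) ^+ 2 * Qq <= (M + 1) * U + (2 * G + 1).
Proof.
move=> M0 h1 h2 h3 h4 h5 h6.
rewrite -(ler_pM2l M0).
have p2 : M * vj <= M * (bq + G) by rewrite ler_pM2l.
have p4 : (M + 1) * (a - M ^+ 2 * Qq) <= (M + 1) * (M * U) by rewrite ler_pM2l //; lra.
have p5 : M * Ajj <= M * 1 by rewrite ler_pM2l.
have p6 : 0 <= M * Qq by apply: mulr_ge0; lra.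
rewrite h1; nra.
Qed.


Definition U m := K%:R + (5 + 4 * sup_norm l1) * (ln (m%:R : R) - ln K%:R) + 4 * Phi m.+1.

Lemma inv_step q m : in_simplex q -> (0 < m)%N ->
  bil (N m) (N m) - m%:R ^+ 2 * bil q q <= m%:R * U m ->
  bil (N m.+1) (N m.+1) - m.+1%:R ^+ 2 * bil q q <= m.+1%:R * U m.+1.
Proof.
move=> hq m0 IH.
have M0 : (0 : R) < m%:R by rewrite ltr0n.
have [_ h5] := nrm (Abnd (i m.+1) (i m.+1)).
have := alg_step M0 (QS m) (wstep m hq) (convex m m%:R q) IH h5 (bil_ge0 q).
move=> h; rewrite -[m.+1%:R]natr1; apply: (le_trans h).
have s0 := sup_ge0.
have d1 := ln_step m0; rewrite ler_pdivrMr ?ltr0n // -[m.+1%:R]natr1 in d1.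
have d2 := Phi_step m; rewrite ler_pdivrMr ?ltr0n // -[m.+1%:R]natr1 in d2.
rewrite /U -[m.+1%:R]natr1.
set L1 := ln (m%:R + 1) in d1 *; set L0 := ln m%:R in d1 *.
set P1 := Phi m.+2 in d2 *; set P0 := Phi m.+1 in d2 *.
set c := (cn m.+1 (i m.+1))%:R in d2 *.
set s := sup_norm l1 in s0 *.
have e1 : 0 <= (5 + 4 * s) * ((L1 - L0) * (m%:R + 1) - 1) by apply: mulr_ge0; lra.
nra.
Qed.


Lemma inv_base q : bil (N K) (N K) - K%:R ^+ 2 * bil q q <= K%:R * U K.
Proof.
rewrite /U subrr mulr0 addr0.
have h1 := Q_bnd K. have h2 := bil_ge0 q. have h3 := Phi_ge0 K.
have h4 : (0 : R) <= K%:R by rewrite ler0n.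
have h5 : 0 <= K%:R ^+ 2 * bil q q by apply: mulr_ge0 => //; apply: sqr_ge0.
have h6 : 0 <= K%:R * Phi K.+1 by apply: mulr_ge0.
nra.
Qed.

Lemma main_inv q m : in_simplex q -> (0 < K)%N -> (K <= m)%N ->
  bil (N m) (N m) - m%:R ^+ 2 * bil q q <= m%:R * U m.
Proof.
move=> hq K0; elim: m => [|m IH]; first by rewrite leqn0 => /eqP K00; rewrite K00 in K0.
rewrite leq_eqVlt => /orP [/eqP <-|hKm]; first exact: inv_base.
apply: inv_step => //; [exact: leq_trans K0 hKm | exact: IH].
Qed.

End Pf.

Theorem mainTheorem6 (R : realType) (K : nat) (A : 'M[R]_K) (l1 : 'I_K -> R)
  (xi : nat -> R) (i : nat -> 'I_K) :
  A^T = A -> psd A ->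
  (forall a b : 'I_K, `|A a b| <= 1) ->
  (forall t : nat, `|xi t| <= 1) ->
  influential_lcb_run A l1 xi i ->
  forall T : nat, (K.+1 <= T)%N ->
  forall q : 'cV[R]_K, in_simplex q ->
    L2 A (emp_dist R i T) - L2 A q <=
      (5 * K%:R + 1) / (2 * T%:R)
      + (2 * K%:R + 2 * sup_norm l1 + 4) * (ln (T%:R) / T%:R).
Proof.
move=> Asym Apsd Abnd xibnd run T KT q hq.
have K0 : (0 < K)%N by case: (i 0) => k; apply: leq_ltn_trans (leq0n k).
have T0 : (0 < T)%N by apply: leq_trans KT.
have KT' : (K <= T)%N by apply: ltnW.
have inv := main_inv Asym Apsd Abnd xibnd run hq K0 KT'.
have PhiT := @Phi_le R K i T T0.
have sK : 0 <= ln (K%:R : R) by apply: ln_ge0; rewrite ler1n.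
have sT : 0 <= ln (T%:R : R) by apply: ln_ge0; rewrite ler1n.
have s0 := sup_ge0 l1.
have -> : L2 A (emp_dist R i T) = 2^-1 * ((T%:R)^-1 * ((T%:R)^-1 * bil A (N R i T) (N R i T))).
  by rewrite /L2 /emp_dist -/(N R i T) -/(bil A _ _) bilZl bilZr.
rewrite /L2 -/(bil A q q).
move: inv; rewrite /U.
set a := bil A (N R i T) (N R i T); set Qq := bil A q q.
set t := (T%:R : R); set LT := ln t; set LK := ln (K%:R : R); set P := Phi R i T.+1.
set s := sup_norm l1; set k := (K%:R : R).
have s1 : 0 <= s by exact: s0.
have sK1 : 0 <= LK by exact: sK.
have sT1 : 0 <= LT by exact: sT.
have PhiT1 : P <= k * LT by exact: PhiT.
have t0 : 0 < t by rewrite ltr0n.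
have k0 : 0 <= k by rewrite ler0n.
set u := t^-1.
have u0 : 0 < u by rewrite invr_gt0.
have tu : t * u = 1 by rewrite mulfV // gt_eqF.
rewrite invfM -/u => inv.
have key : u ^+ 2 * (a - t ^+ 2 * Qq) <= u ^+ 2 * (t * (k + (5 + 4 * s) * (LT - LK) + 4 * P)).
  by rewrite ler_wpM2l // sqr_ge0.
have e1 : u ^+ 2 * (a - t ^+ 2 * Qq) = u ^+ 2 * a - Qq.
  by rewrite mulrBr mulrA -exprMn (mulrC u) tu expr1n mul1r.
have e2 : u ^+ 2 * (t * (k + (5 + 4 * s) * (LT - LK) + 4 * P)) =
          u * (k + (5 + 4 * s) * (LT - LK) + 4 * P).
  by rewrite expr2 -mulrA (mulrA u t) (mulrC u t) tu mul1r.
rewrite e1 e2 in key.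
have h1 : u * (k + (5 + 4 * s) * (LT - LK) + 4 * P) <= u * (k + (5 + 4 * s) * LT + 4 * (k * LT)).
  apply: ler_wpM2l; first lra.
  have : (5 + 4 * s) * (LT - LK) <= (5 + 4 * s) * LT by apply: ler_wpM2l; lra.
  lra.
have h2 : 0 <= u * LT by apply: mulr_ge0; lra.
have h3 : 0 <= u * k by apply: mulr_ge0; lra.
have h4 : 0 <= u * (s * LT) by apply: mulr_ge0; [lra|apply: mulr_ge0; lra].
have h5 : 0 <= u * (k * LT) by apply: mulr_ge0; [lra|apply: mulr_ge0; lra].
nra.
Qed.
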